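(* Let $\boldsymbol{A}$ be the adjacency matrix of an undirected graph without self-loops on a finite vertex set $\boldsymbol{V}=\{1,\dots,N\}$. Let $\mathcal{R}_e\subset\boldsymbol{V}$ be a nonempty set of egos, $n_e=|\mathcal{R}_e|$, and $\mathcal{R}_a\subset\boldsymbol{V}\setminus\mathcal{R}_e$ a nonempty set of alters, $n_a=|\mathcal{R}_a|$, where each alter $j\in\mathcal{R}_a$ has a unique recruiting ego $e(j)\in\mathcal{R}_e$ with $A_{j\,e(j)}=1$. Let $\widetilde{\boldsymbol{A}}$ be the observed adjacency matrix, with $\widetilde A_{ij}=\widetilde A_{ji}=1$ if and only if $i\in\mathcal{R}_a$ and $j=e(i)$ (and all other entries $0$). Let the treatment vector $\boldsymbol{Z}\in\{0,1\}^N$ have independent components with $\Pr(Z_i=1)=p_z\,\mathbb{I}\{i\in\mathcal{R}_e\}$ for a known $p_z\in(0,1)$. Define the true and observed exposures $F_i=\mathbb{I}\{\sum_{j\neq i}Z_jA_{ij}>0\}$ and $\widetilde F_i=\mathbb{I}\{\sum_{j\neq i}Z_j\widetilde A_{ij}>0\}$. Each unit $i\in\mathcal{R}_e\cup\mathcal{R}_a$ has fixed (non-random) real potential outcomes $Y_i(z,f)$, $z,f\in\{0,1\}$, and observed outcome $Y_i=\sum_{z,f\in\{0,1\}}Y_i(z,f)\mathbb{I}\{Z_i=z,F_i=f\}$. Define $$IE=\frac1{n_a}\sum_{i\in\mathcal{R}_a}[Y_i(0,1)-Y_i(0,0)],\qquad DE=\frac1{n_e}\sum_{i\in\mathcal{R}_e}[Y_i(1,0)-Y_i(0,0)],$$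 $$\widehat{IE}=\frac1{n_a}\sum_{i\in\mathcal{R}_a}\Big[\frac{\mathbb{I}\{\widetilde F_i=1\}Y_i}{p_z}-\frac{\mathbb{I}\{\widetilde F_i=0\}Y_i}{1-p_z}\Big],\qquad \widehat{DE}=\frac1{n_e}\sum_{i\in\mathcal{R}_e}\Big[\frac{\mathbb{I}\{Z_i=1\}Y_i}{p_z}-\frac{\mathbb{I}\{Z_i=0\}Y_i}{1-p_z}\Big].$$ For $i\in\mathcal{R}_a$ let $\pi_i^a=\Pr(F_i=1)$ and for $i\in\mathcal{R}_e$ let $\pi_i^e=\Pr(F_i=1)$, probabilities taken over $\boldsymbol{Z}$. Then, with expectations over $\boldsymbol{Z}$, $$\mathbb{E}_{\boldsymbol{Z}}[\widehat{IE}]=IE+\frac1{n_a}\sum_{i\in\mathcal{R}_a}\frac{p_z-\pi_i^a}{1-p_z}\,[Y_i(0,1)-Y_i(0,0)],$$ $$\mathbb{E}_{\boldsymbol{Z}}[\widehat{DE}]=DE+\frac1{n_e}\sum_{i\in\mathcal{R}_e}\pi_i^e\Big\{[Y_i(1,1)-Y_i(0,1)]-[Y_i(1,0)-Y_i(0,0)]\Big\}.$$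
   Context: Design-based setting: the network $\boldsymbol{A}$, the sampled sets $\mathcal{R}_e,\mathcal{R}_a$, the recruitment map $e(\cdot)$ and the potential outcomes are all fixed; the only randomness is the treatment assignment $\boldsymbol{Z}$ (all probabilities and expectations are over $\boldsymbol{Z}$, conditional on the sample). The observed network consists of disjoint ego-networks (each ego with the alters it recruited), while the true network $\boldsymbol{A}$ may contain additional ego–ego and alter–ego edges. *)

(* Defs.v *)
From mathcomp Require Import all_boot all_order all_algebra.
Set Implicit Arguments. Unset Strict Implicit. Unset Printing Implicit Defensive.
Import Order.TTheory GRing.Theory Num.Theory.
Local Open Scope ring_scope.

Section Egocentric.
Variables (R : realFieldType) (N : nat).
Implicit Types (A : 'I_N -> 'I_N -> bool) (Z : {ffun 'I_N -> bool}).

Definition obs_adj (Ra : {set 'I_N}) (e : 'I_N -> 'I_N) : 'I_N -> 'I_N -> bool :=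
  fun i j => ((i \in Ra) && (j == e i)) || ((j \in Ra) && (i == e j)).

Definition exposure A Z (i : 'I_N) : bool :=
  (0 < \sum_(j < N | j != i) (Z j * A i j))%N.

Definition treat_prob (pz : R) (Re : {set 'I_N}) (i : 'I_N) : R :=
  pz * (i \in Re)%:R.

Definition prZ (pz : R) (Re : {set 'I_N}) Z : R :=
  \prod_(i < N) (if Z i then treat_prob pz Re i else 1 - treat_prob pz Re i).

Definition EZ (pz : R) (Re : {set 'I_N}) (X : {ffun 'I_N -> bool} -> R) : R :=
  \sum_(Z : {ffun 'I_N -> bool}) prZ pz Re Z * X Z.

Definition PrZ (pz : R) (Re : {set 'I_N}) (P : {ffun 'I_N -> bool} -> bool) : R :=
  \sum_(Z : {ffun 'I_N -> bool} | P Z) prZ pz Re Z.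

Definition obs_outcome (Y : 'I_N -> bool -> bool -> R) A Z (i : 'I_N) : R :=
  \sum_(z : bool) \sum_(f : bool) Y i z f * ((Z i == z) && (exposure A Z i == f))%:R.

Definition IE (Ra : {set 'I_N}) (Y : 'I_N -> bool -> bool -> R) : R :=
  (#|Ra|%:R)^-1 * \sum_(i in Ra) (Y i false true - Y i false false).

Definition DE (Re : {set 'I_N}) (Y : 'I_N -> bool -> bool -> R) : R :=
  (#|Re|%:R)^-1 * \sum_(i in Re) (Y i true false - Y i false false).

Definition IE_hat (pz : R) (Ra : {set 'I_N}) (e : 'I_N -> 'I_N)
    (Y : 'I_N -> bool -> bool -> R) A Z : R :=
  (#|Ra|%:R)^-1 * \sum_(i in Ra)
    ((exposure (obs_adj Ra e) Z i == true)%:R * obs_outcome Y A Z i / pz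
     - (exposure (obs_adj Ra e) Z i == false)%:R * obs_outcome Y A Z i / (1 - pz)).

Definition DE_hat (pz : R) (Re : {set 'I_N})
    (Y : 'I_N -> bool -> bool -> R) A Z : R :=
  (#|Re|%:R)^-1 * \sum_(i in Re)
    ((Z i == true)%:R * obs_outcome Y A Z i / pz
     - (Z i == false)%:R * obs_outcome Y A Z i / (1 - pz)).

End Egocentric.

(* Main.v *)
Require Import Defs.
From mathcomp Require Import all_boot all_order all_algebra.
From mathcomp Require Import ring lra.
Import Order.TTheory GRing.Theory Num.Theory.
Local Open Scope ring_scope.

Section Aux.
Variables (R : realFieldType) (N : nat) (pz : R) (Re : {set 'I_N}).
Local Notation E := (EZ pz Re).
Local Notation fz := {ffun 'I_N -> bool}.

Lemma EZ_ext {X W : fz -> R} : (forall Z, X Z = W Z) -> E X = E W.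
Proof. by move=> h; apply: eq_bigr => Z _; rewrite h. Qed.

Definition fact_ (i : 'I_N) (b : bool) : R :=
  if b then treat_prob pz Re i else 1 - treat_prob pz Re i.

Lemma prZ_sum : \sum_(Z : fz) prZ pz Re Z = 1.
Proof.
rewrite /prZ -(bigA_distr_bigA fact_).
by rewrite big1 // => i _; rewrite big_bool /fact_ /= addrC subrK.
Qed.

Lemma EZ_aff (a b c : R) (U V : fz -> R) :
  E (fun Z => a * U Z + b * V Z + c) = a * E U + b * E V + c.
Proof.
rewrite /EZ.
under eq_bigr => Z _ do rewrite !mulrDr (mulrCA _ a) (mulrCA _ b).
by rewrite !big_split /= -!mulr_sumr -mulr_suml prZ_sum mul1r.
Qed.

Lemma PrZE (P : fz -> bool) : PrZ pz Re P = E (fun Z => (P Z)%:R).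
Proof.
rewrite /PrZ /EZ big_mkcond; apply: eq_bigr => Z _.
by case: (P Z); rewrite ?mulr1 ?mulr0.
Qed.

Definition flip (i : 'I_N) (Z : fz) : fz :=
  [ffun j => if j == i then ~~ Z j else Z j].

Lemma flipK i : involutive (flip i).
Proof.
move=> Z; apply/ffunP => j; rewrite !ffunE; case: eqP => //= _.
by rewrite negbK.
Qed.

Definition rest (i : 'I_N) (Z : fz) := \prod_(j < N | j != i) fact_ j (Z j).

Lemma prZ_split i Z : prZ pz Re Z = fact_ i (Z i) * rest i Z.
Proof. by rewrite /prZ (bigD1 i). Qed.

Lemma rest_flip i Z : rest i (flip i Z) = rest i Z.
Proof. apply: eq_bigr => j /negbTE h; by rewrite ffunE h. Qed.

Lemma flip_E i {X : fz -> R} : (forall Z, X (flip i Z) = X Z) ->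
  E (fun Z => (Z i)%:R * X Z) = treat_prob pz Re i * E X /\
  E (fun Z => (~~ Z i)%:R * X Z) = (1 - treat_prob pz Re i) * E X.
Proof.
move=> hX.
pose g := fun Z : fz => (Z i)%:R * rest i Z * X Z.
have h1 : E (fun Z => (Z i)%:R * X Z) = treat_prob pz Re i * \sum_Z g Z.
  rewrite /EZ mulr_sumr; apply: eq_bigr => Z _; rewrite (prZ_split i) /g /fact_.
  by case: (Z i) => /=; ring.
have h2 : E (fun Z => (~~ Z i)%:R * X Z) = (1 - treat_prob pz Re i) * \sum_Z g Z.
  rewrite (reindex_inj (inv_inj (flipK i)) (F := g)) /EZ mulr_sumr.
  apply: eq_bigr => Z _; rewrite /g rest_flip hX ffunE eqxx (prZ_split i) /fact_.
  by case: (Z i) => /=; ring.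
have h3 : E X = \sum_Z g Z.
  rewrite (EZ_ext (W := fun Z => 1 * ((Z i)%:R * X Z) + 1 * ((~~ Z i)%:R * X Z) + 0)).
    by rewrite EZ_aff h1 h2; ring.
  by move=> Z; case: (Z i) => /=; ring.
by rewrite h1 h2 h3.
Qed.

Lemma EZ_coord j : E (fun Z => (Z j)%:R) = treat_prob pz Re j.
Proof.
have := (flip_E j (X := fun _ => 1)) (fun _ => erefl).
case=> h _.
rewrite (EZ_ext (W := fun Z => (Z j)%:R * 1)); last by move=> Z; rewrite mulr1.
by rewrite h /EZ; under eq_bigr => Z _ do rewrite mulr1; rewrite prZ_sum mulr1.
Qed.

Lemma EZ_supp {X W : fz -> R} :
  (forall Z : fz, (forall j, j \notin Re -> Z j = false) -> X Z = W Z) ->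
  E X = E W.
Proof.
move=> h; apply: eq_bigr => Z _.
case: (boolP [forall j, (j \notin Re) ==> ~~ Z j]) => [/forallP H|].
  rewrite h // => j hj; move: (H j); rewrite hj /=; exact: negbTE.
rewrite negb_forall => /existsP [j]; rewrite negb_imply negbK => /andP [hj zj].
by rewrite (prZ_split j) /fact_ zj /treat_prob (negbTE hj) mulr0 !mul0r.
Qed.

End Aux.
Arguments flip {N}.
Arguments EZ_ext {R N pz Re X W}.
Arguments EZ_supp {R N pz Re X W}.
Arguments flip_E {R N} pz Re i {X}.

Lemma obs_outcomeE (R : realFieldType) N (Y : 'I_N -> bool -> bool -> R) (A : 'I_N -> 'I_N -> bool) (Z : {ffun 'I_N -> bool}) (i : 'I_N) :
  obs_outcome Y A Z i = Y i (Z i) (exposure A Z i).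
Proof.
rewrite /obs_outcome !big_bool /=.
by case: (Z i); case: (exposure A Z i) => /=; ring.
Qed.

Lemma exposure_flip N (A : 'I_N -> 'I_N -> bool) (Z : {ffun 'I_N -> bool}) (i : 'I_N) :
  exposure A (flip i Z) i = exposure A Z i.
Proof.
rewrite /exposure; congr (0 < _)%N; apply: eq_bigr => j /negbTE h.
by rewrite ffunE h.
Qed.

Theorem proposition1 (R : realFieldType) (N : nat)
    (A : 'I_N -> 'I_N -> bool) (Re Ra : {set 'I_N}) (e : 'I_N -> 'I_N)
    (pz : R) (Y : 'I_N -> bool -> bool -> R)
    (Asym : forall i j, A i j = A j i)
    (Airr : forall i, A i i = false)
    (Re_ne : Re != set0) (Ra_ne : Ra != set0)
    (Ra_disj : [disjoint Ra & Re])
    (e_ego : forall j, j \in Ra -> e j \in Re)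
    (e_edge : forall j, j \in Ra -> A j (e j))
    (pz_gt0 : 0 < pz) (pz_lt1 : pz < 1) :
  EZ pz Re (fun Z => IE_hat pz Ra e Y A Z)
    = IE Ra Y + (#|Ra|%:R)^-1 * \sum_(i in Ra)
        ((pz - PrZ pz Re (fun Z => exposure A Z i)) / (1 - pz)
         * (Y i false true - Y i false false))
  /\
  EZ pz Re (fun Z => DE_hat pz Re Y A Z)
    = DE Re Y + (#|Re|%:R)^-1 * \sum_(i in Re)
        (PrZ pz Re (fun Z => exposure A Z i)
         * ((Y i true true - Y i false true) - (Y i true false - Y i false false))).
Proof.
have hp : pz != 0 by rewrite gt_eqF.
have hq : 1 - pz != 0 by rewrite subr_eq0 eq_sym lt_eqF.
have EZscale : forall (c : R) (X : {ffun 'I_N -> bool} -> R),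
    EZ pz Re (fun Z => c * X Z) = c * EZ pz Re X.
  by move=> c X; rewrite /EZ mulr_sumr; apply: eq_bigr => Z _; rewrite mulrCA.
have EZsum : forall (S : {set 'I_N}) (F : 'I_N -> {ffun 'I_N -> bool} -> R),
    EZ pz Re (fun Z => \sum_(i in S) F i Z) = \sum_(i in S) EZ pz Re (F i).
  move=> S F; rewrite /EZ.
  under eq_bigr => Z _ do rewrite mulr_sumr.
  by rewrite exchange_big.
split.
- rewrite /IE_hat /IE EZscale EZsum -mulrDr -big_split /=; congr (_ * _).
  apply: eq_bigr => i hi.
  have hiRe : i \notin Re by rewrite (disjointFr Ra_disj hi).
  have heRe := e_ego i hi.
  have hei : e i != i by apply: contraNneq hiRe => <-.
  rewrite PrZE.
  set a := Y i false true / pz + Y i false true / (1 - pz).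
  set b := (Y i false false - Y i false true) / (1 - pz).
  set c := - (Y i false false / (1 - pz)).
  rewrite (EZ_supp (W := fun Z => a * (Z (e i))%:R + b * (exposure A Z i)%:R + c)).
    rewrite EZ_aff EZ_coord /treat_prob heRe mulr1 /a /b /c.
    field; by rewrite hp hq.
  move=> Z hZ.
  have Zi : Z i = false by apply: hZ.
  have hobs : exposure (obs_adj Ra e) Z i = Z (e i).
    rewrite /exposure (bigD1 (e i)) //= big1; last first.
      move=> j /andP [hji hje]; rewrite /obs_adj (negbTE hje) andbF /=.
      case hjRa: (j \in Ra); last by rewrite muln0.
      have : i != e j by apply: contraNneq hiRe => ->; exact: e_ego.
      by move/negbTE => ->; rewrite muln0.
    by rewrite /obs_adj hi eqxx /=; case: (Z (e i)).
  have himp : Z (e i) -> exposure A Z i.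
    move=> zei; rewrite /exposure (bigD1 (e i)) //= zei (e_edge i hi).
    exact: leq_addr.
  rewrite obs_outcomeE hobs Zi /a /b /c.
  case: (Z (e i)) himp => [/(_ isT) -> | _] /=; [| case: (exposure A Z i) => /=];
    rewrite ?mul1r ?mul0r ?mulr1 ?mulr0; field; by rewrite ?hp ?hq.
- rewrite /DE_hat /DE EZscale EZsum -mulrDr -big_split /=; congr (_ * _).
  apply: eq_bigr => i hi.
  rewrite PrZE.
  pose W := fun (b : bool) (Z : {ffun 'I_N -> bool}) => Y i b (exposure A Z i).
  have hW : forall b Z, W b (flip i Z) = W b Z.
    by move=> b Z; rewrite /W exposure_flip.
  rewrite (EZ_ext (W := fun Z => pz^-1 * ((Z i)%:R * W true Z)
                      + (- (1 - pz)^-1) * ((~~ Z i)%:R * W false Z) + 0)); last first.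
    move=> Z; rewrite obs_outcomeE /W; case: (Z i) => /=; field; by rewrite ?hp ?hq.
  rewrite EZ_aff.
  have [h1 _] := flip_E pz Re i (hW true).
  have [_ h2] := flip_E pz Re i (hW false).
  rewrite h1 h2 /treat_prob hi mulr1.
  have EW : forall b, EZ pz Re (W b) = (Y i b true - Y i b false)
      * EZ pz Re (fun Z => (exposure A Z i)%:R) + Y i b false.
    move=> b.
    rewrite (EZ_ext (W := fun Z => (Y i b true - Y i b false) * (exposure A Z i)%:R
       + 0 * (exposure A Z i)%:R + Y i b false)).
      by rewrite EZ_aff mul0r addr0.
    by move=> Z; rewrite /W; case: (exposure A Z i) => /=; ring.
  rewrite !EW.
  field; by rewrite hp hq.
Qed.
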